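(* Let $k\ge 3$, let $n_1,\dots,n_k$ be positive integers, and let $X=\nu(\mathbb{P}^{n_1}\times\cdots\times\mathbb{P}^{n_k})\subset\mathbb{P}^M$ be the Segre variety of $k$ factors. Then for each integer $x\in\{3,\dots,k-1\}$ there exists $p\in\sigma_3(X)\setminus\sigma_2(X)$ with $r_X(p)=x$.
   Context: Work over an algebraically closed field $K$. $\nu:\mathbb{P}^{n_1}\times\cdots\times\mathbb{P}^{n_k}\to\mathbb{P}^M$, $M=\prod_{i=1}^k(n_i+1)-1$, is the Segre embedding (given by $|\mathcal{O}(1,\dots,1)|$), and $X$ is its image. The $s$-th secant variety $\sigma_s(X)$ is the Zariski closure of the union of all linear spaces $\mathbb{P}^{s-1}$ spanned by $s$ points of $X$. The $X$-rank $r_X(p)$ of $p\in\mathbb{P}^M$ is the minimal $s$ such that $p$ lies in the linear span of $s$ points of $X$. *)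

(* Defs.v *)
From HB Require Import structures.
From mathcomp Require Import all_boot all_order all_algebra.
Set Implicit Arguments. Unset Strict Implicit. Unset Printing Implicit Defensive.
Import GRing.Theory.
Local Open Scope ring_scope.

(* Homogeneous coordinates of
   P^M (M = prod (n_i+1) - 1) are indexed by such multi-indices. *)
Definition midx (k : nat) (n : 'I_k -> nat) : finType :=
  {dffun forall i : 'I_k, 'I_(n i).+1}.

(* Vectors of K^(M+1) (affine cone over P^M): tensors. *)
Definition tensor (K : closedFieldType) (k : nat) (n : 'I_k -> nat) :=
  midx n -> K.

(* Sum of s (decomposable) tensors v_a(0) (x) ... (x) v_a(k-1), each factor
   nonzero: exactly the affine cones over linear spans of s points of the
   Segre variety X (the coefficients of the span are absorbed into the
   factors; a zero coefficient is allowed by letting the term be absent,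
   which we encode by allowing a scalar c_a). *)
Definition in_span_of_points (K : closedFieldType) (k : nat) (n : 'I_k -> nat)
    (s : nat) (T : tensor K n) : Prop :=
  exists (c : 'I_s -> K) (v : 'I_s -> forall i : 'I_k, 'I_(n i).+1 -> K),
    (forall a i, exists t, v a i t != 0) /\
    forall j : midx n, T j = \sum_(a < s) c a * \prod_(i < k) v a i (j i).

Definition X_rank (K : closedFieldType) (k : nat) (n : 'I_k -> nat)
    (T : tensor K n) (x : nat) : Prop :=
  in_span_of_points x T /\ forall s, in_span_of_points s T -> (x <= s)%N.

Inductive pexpr (K : closedFieldType) (J : Type) : Type :=
| PVar of J
| PConst of K
| PAdd of pexpr K J & pexpr K J
| PMul of pexpr K J & pexpr K J.

Fixpoint peval (K : closedFieldType) (J : Type) (e : pexpr K J) (T : J -> K) : K :=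
  match e with
  | PVar j => T j
  | PConst c => c
  | PAdd e1 e2 => peval e1 T + peval e2 T
  | PMul e1 e2 => peval e1 T * peval e2 T
  end.

(* Zariski closure: T lies in the closure of S iff every polynomial vanishing
   on S vanishes at T.  (For cones S this is the affine cone over the
   projective Zariski closure.) *)
Definition zariski_closure (K : closedFieldType) (J : Type) (S : (J -> K) -> Prop)
    (T : J -> K) : Prop :=
  forall e : pexpr K J, (forall U, S U -> peval e U = 0) -> peval e T = 0.

(* Affine cone over the s-th secant variety sigma_s(X). *)
Definition secant (K : closedFieldType) (k : nat) (n : 'I_k -> nat) (s : nat)
    (T : tensor K n) : Prop :=
  zariski_closure (fun U : tensor K n => in_span_of_points s U) T.

(* Main.v *)
Require Import Defs.
From mathcomp Require Import all_boot all_order all_algebra.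
From mathcomp Require Import ring zify.
Set Implicit Arguments. Unset Strict Implicit. Unset Printing Implicit Defensive.
Import GRing.Theory.
Local Open Scope ring_scope.


Lemma span_ext (K : closedFieldType) k (n : 'I_k -> nat) s (T T' : tensor K n) :
  (forall j, T j = T' j) -> in_span_of_points s T -> in_span_of_points s T'.
Proof.
move=> E [c [v [Hv HT]]]; exists c, v; split=> // j; by rewrite -E.
Qed.

Lemma span_add (K : closedFieldType) k (n : 'I_k -> nat) s t (T1 T2 : tensor K n) :
  in_span_of_points s T1 -> in_span_of_points t T2 ->
  in_span_of_points (s + t) (fun j => T1 j + T2 j).
Proof.
move=> [c1 [v1 [Hv1 H1]]] [c2 [v2 [Hv2 H2]]].
exists (fun a => match split a with inl a1 => c1 a1 | inr a2 => c2 a2 end).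
exists (fun a => match split a with inl a1 => v1 a1 | inr a2 => v2 a2 end).
split.
  by move=> a i; case: (split a) => b; [apply: Hv1 | apply: Hv2].
move=> j; rewrite H1 H2 big_split_ord /=; congr (_ + _); apply: eq_bigr => a _.
  by rewrite -[lshift _ _]/(unsplit (inl a : 'I_s + 'I_t)) unsplitK.
by rewrite -[rshift _ _]/(unsplit (inr a : 'I_s + 'I_t)) unsplitK.
Qed.

Lemma span0 (K : closedFieldType) k (n : 'I_k -> nat) :
  in_span_of_points 0 (fun _ : midx n => (0 : K)).
Proof.
exists (fun _ => 0), (fun _ _ _ => 0); split.
  by case.
by move=> j; rewrite big_ord0.
Qed.

Lemma span_scale (K : closedFieldType) k (n : 'I_k -> nat) s (T : tensor K n) (al : K) :
  al != 0 -> in_span_of_points s (fun j => al * T j) -> in_span_of_points s T.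
Proof.
move=> Hal [c [v [Hv HT]]]; exists (fun a => al^-1 * c a), v; split=> // j.
under eq_bigr do rewrite -mulrA.
by rewrite -mulr_sumr -HT mulrA mulVf // mul1r.
Qed.

Lemma span_drop (K : closedFieldType) k (n : 'I_k -> nat) s (T : tensor K n)
  (c : 'I_s.+1 -> K) (v : 'I_s.+1 -> forall i : 'I_k, 'I_(n i).+1 -> K) (a0 : 'I_s.+1) :
  (forall a i, exists t, v a i t != 0) ->
  (forall j : midx n, T j = \sum_(a < s.+1) c a * \prod_(i < k) v a i (j i)) ->
  c a0 = 0 -> in_span_of_points s T.
Proof.
move=> Hv HT Hc; exists (fun a => c (lift a0 a)), (fun a => v (lift a0 a)); split.
  by move=> a i; apply: Hv.
move=> j; rewrite HT (bigD1_ord a0) //= Hc mul0r add0r //.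
Qed.


Definition patidx k (n : 'I_k -> nat) (U : {set 'I_k}) : midx n :=
  finfun (fun i : 'I_k => (inord (i \in U) : 'I_(n i).+1)).

Definition basic (K : closedFieldType) k (n : 'I_k -> nat) (U : {set 'I_k}) : tensor K n :=
  fun j => \prod_i ((j i : nat) == (i \in U))%:R.

Definition upd k (n : 'I_k -> nat) (j : midx n) (i : 'I_k) (t : nat) : midx n :=
  finfun (fun i' : 'I_k => (if i' == i then inord t else j i' : 'I_(n i').+1)).

Definition contr (K : closedFieldType) k (n : 'I_k -> nat) (i : 'I_k) (a b : K)
  (T : tensor K n) : tensor K n :=
  fun j => ((j i : nat) == 0%N)%:R * (a * T (upd j i 0) + b * T (upd j i 1)).

Lemma natb_eq (a b : bool) : ((a : nat) == (b : nat)) = (a == b).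
Proof. by case: a; case: b. Qed.

Lemma patidxE k (n : 'I_k -> nat) (hn : forall i, (0 < n i)%N) U i :
  (patidx n U i : nat) = (i \in U).
Proof. by rewrite ffunE inordK //; case: (i \in U) => //; rewrite ltnS hn. Qed.

Lemma basic_patidx (K : closedFieldType) k (n : 'I_k -> nat) (hn : forall i, (0 < n i)%N) V W :
  basic K V (patidx n W) = (V == W)%:R.
Proof.
rewrite /basic; under eq_bigr do rewrite patidxE // natb_eq.
case: (pickP (fun i => (i \in W) != (i \in V))) => [i Hi | H].
  rewrite (bigD1 i) //= (negbTE Hi) mul0r.
  case: eqP => // E; move: Hi; by rewrite E eqxx.
have -> : V == W.
  apply/eqP/setP => i; have := H i; by case: (i \in V); case: (i \in W).
rewrite big1 // => i _; have := H i; by case: (i \in V); case: (i \in W).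
Qed.

Lemma updE k (n : 'I_k -> nat) (hn : forall i, (0 < n i)%N) (j : midx n) i t i' :
  (t <= 1)%N -> (upd j i t i' : nat) = if i' == i then t else j i'.
Proof.
move=> ht; rewrite ffunE; case: (i' == i) => //; rewrite inordK //.
by apply: (leq_ltn_trans ht); rewrite ltnS hn.
Qed.

Lemma prod_upd (K : closedFieldType) k (n : 'I_k -> nat) (f : forall i, 'I_(n i).+1 -> K) (j : midx n) i t :
  \prod_i' f i' (upd j i t i') = f i (inord t) * \prod_(i' | i' != i) f i' (j i').
Proof.
rewrite (bigD1 i) //= ffunE eqxx; congr (_ * _); apply: eq_bigr => i' Hi'.
by rewrite ffunE (negbTE Hi').
Qed.

Lemma contr_span (K : closedFieldType) k (n : 'I_k -> nat) s (T : tensor K n)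
  (c : 'I_s.+1 -> K) (v : 'I_s.+1 -> forall i : 'I_k, 'I_(n i).+1 -> K) (a0 : 'I_s.+1)
  (i : 'I_k) (al be : K) :
  (forall a i, exists t, v a i t != 0) ->
  (forall j : midx n, T j = \sum_(a < s.+1) c a * \prod_(i < k) v a i (j i)) ->
  al * v a0 i (inord 0) + be * v a0 i (inord 1) = 0 ->
  in_span_of_points s (contr i al be T).
Proof.
move=> Hv HT H0.
apply: (@span_drop K k n s _ (fun a => c a * (al * v a i (inord 0) + be * v a i (inord 1)))
   (fun a i' t => if i' == i then ((t : nat) == 0%N)%:R else v a i' t) a0).
- move=> a i'; case: (i' == i); last exact: Hv.
  by exists ord0; rewrite eqxx oner_neq0.
- move=> j; rewrite /contr !HT.
  under eq_bigr do rewrite prod_upd.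
  under [X in _ * (_ + be * X)]eq_bigr do rewrite prod_upd.
  under [RHS]eq_bigr do rewrite (bigD1 i) //= eqxx.
  rewrite !mulr_sumr -big_split mulr_sumr; apply: eq_bigr => a _.
  have -> : \prod_(i' | i' != i) (if i' == i then ((j i' : nat) == 0%N)%:R else v a i' (j i'))
     = \prod_(i' | i' != i) v a i' (j i').
    by apply: eq_bigr => i' Hi'; rewrite (negbTE Hi').
  rewrite /=; ring.
- by rewrite H0 mulr0.
Qed.


Definition G (K : closedFieldType) k (n : 'I_k -> nat) (S R : {set 'I_k}) (lam mu : K) : tensor K n :=
  fun j => \sum_(i in S) basic K [set i] j + lam * basic K set0 j + mu * basic K R j.

Lemma setD1_out k (A : {set 'I_k}) x : x \notin A -> A :\ x = A.
Proof.
move=> H; apply/setP => y; rewrite !inE; case: eqP => // ->; by rewrite (negbTE H).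
Qed.

Lemma basic_upd0 (K : closedFieldType) k (n : 'I_k -> nat) (hn : forall i, (0 < n i)%N)
  U (j : midx n) i t : (j i : nat) = 0%N -> (t <= 1)%N ->
  basic K U (upd j i t) = (t == (i \in U))%:R * basic K (U :\ i) j.
Proof.
move=> H0 ht; rewrite /basic (prod_upd (fun i' (u : 'I_(n i').+1) => ((u : nat) == (i' \in U))%:R)).
rewrite inordK; last by apply: (leq_ltn_trans ht); rewrite ltnS hn.
congr (_ * _); rewrite [RHS](bigD1 i) //= H0 !inE eqxx /= mul1r.
by apply: eq_bigr => i' Hi'; rewrite !inE Hi'.
Qed.

Lemma basic_nz (K : closedFieldType) k (n : 'I_k -> nat) (U : {set 'I_k}) (j : midx n) i :
  i \notin U -> (j i : nat) != 0%N -> basic K U j = 0.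
Proof.
move=> HU Hj; rewrite /basic (bigD1 i) //= (negbTE HU) (negbTE Hj) mul0r //.
Qed.

Lemma contr_G (K : closedFieldType) k (n : 'I_k -> nat) (hn : forall i, (0 < n i)%N)
  (S R : {set 'I_k}) (lam mu al be : K) (i : 'I_k) (j : midx n) :
  i \in S -> i \notin R -> al != 0 ->
  contr i al (-be) (G (n:=n) S R lam mu) j = al * G (n:=n) (S :\ i) R (lam - be / al) mu j.
Proof.
move=> HS HR Hal; rewrite /contr /G.
case: (eqVneq (j i : nat) 0%N) => H.
  rewrite mul1r !(big_setD1 i HS) /=.
  rewrite !basic_upd0 // set11 !inE /= setDv set0D (setD1_out HR) (negbTE HR).
  have E : forall t, (t <= 1)%N -> \sum_(i0 in S :\ i) basic K [set i0] (upd j i t) =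
      (t == 0%N)%:R * \sum_(i0 in S :\ i) basic K [set i0] j.
    move=> t ht; rewrite mulr_sumr; apply: eq_bigr => i' Hi'.
    have Hne : i != i' by move: Hi'; rewrite !inE eq_sym => /andP [].
    rewrite basic_upd0 // inE (negbTE Hne) setD1_out // inE //.
  rewrite !E //= mul1r mul0r.
  field; exact: Hal.
rewrite mul0r.
rewrite big1; last first.
  move=> i' Hi'; apply: (@basic_nz K k n _ j i) => //; rewrite inE.
  by move: Hi'; rewrite !inE eq_sym => /andP [].
rewrite (@basic_nz K k n set0 j i) ?in_set0 // (@basic_nz K k n R j i) //.
by rewrite !mulr0 !addr0 mulr0.
Qed.


Lemma G_patidx (K : closedFieldType) k (n : 'I_k -> nat) (hn : forall i, (0 < n i)%N)
  (S R W : {set 'I_k}) (lam mu : K) :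
  G (n:=n) S R lam mu (patidx n W) =
  \sum_(i in S) ([set i] == W)%:R + lam * (set0 == W)%:R + mu * (R == W)%:R.
Proof. by rewrite /G !basic_patidx //; under eq_bigr do rewrite basic_patidx //. Qed.

Lemma lowerG (K : closedFieldType) k (n : 'I_k -> nat) (hn : forall i, (0 < n i)%N)
  (R : {set 'I_k}) (mu : K) r0 :
  r0 \in R -> mu != 0 ->
  forall m (S : {set 'I_k}) (lam : K) s, #|S| = m -> (forall i, i \in S -> i \notin R) ->
  in_span_of_points s (G (n:=n) S R lam mu) -> (m < s)%N.
Proof.
move=> Hr0 Hmu m; elim: m => [|m IH] S lam s HS Hdis.
  case: s => // [[c [v [Hv HT]]]].
  have := HT (patidx n R); rewrite big_ord0 G_patidx // eqxx.
  have -> : S = set0 by apply/eqP; rewrite -cards_eq0 HS.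
  rewrite big_set0 mulr1.
  have -> : (set0 == R) = false.
    by apply/negbTE/eqP => E; move: Hr0; rewrite -E inE.
  rewrite mulr0 !add0r => E; by move: Hmu; rewrite E eqxx.
case=> c [v [Hv HT]].
have [i Hi] : exists i, i \in S by apply/card_gt0P; rewrite HS.
have Hsum : \sum_(a < s) c a * \prod_(i0 < k) v a i0 (patidx n [set i] i0) = 1.
  rewrite -HT G_patidx // (big_setD1 i Hi) /= eqxx big1; last first.
    move=> i' Hi'; rewrite (inj_eq set1_inj).
    by move: Hi'; rewrite !inE => /andP [/negbTE ->].
  have -> : (set0 == [set i]) = false.
    by apply/negbTE/eqP => E; move: (set11 i); rewrite -E inE.
  have -> : (R == [set i]) = false.
    by apply/negbTE/eqP => E; move: (Hdis i Hi); rewrite E set11.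
  by rewrite !mulr0 !addr0.
case: (pickP (fun a => v a i (inord 1) != 0)) => [a0 Ha0 | Hnone]; last first.
  move: Hsum; rewrite big1 => [E|a _].
    by move: (@oner_neq0 K); rewrite -E eqxx.
  rewrite (bigD1 i) //= ffunE set11.
  by move: (Hnone a) => /negbFE /eqP ->; rewrite mul0r mulr0.
revert Ha0 Hsum HT Hv; revert a0 v c; case: s => [|s] a0 v c Ha0 Hsum HT Hv; first by move: Ha0; case: a0.
have Hc := @contr_span K k n s _ c v a0 i (v a0 i (inord 1)) (- v a0 i (inord 0)) Hv HT.
have Hsp : in_span_of_points s (contr i (v a0 i (inord 1)) (- v a0 i (inord 0)) (G (n:=n) S R lam mu)).
  by apply: Hc; ring.
have HiR : i \notin R by apply: Hdis.
have Hsp2 := span_ext (fun j => contr_G hn lam mu (v a0 i (inord 0)) j Hi HiR Ha0) Hsp.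
have Hsp3 := span_scale Ha0 Hsp2.
have : (m < s)%N.
  apply: IH Hsp3.
    by move: HS; rewrite (cardsD1 i) Hi add1n => -[].
  by move=> i' ; rewrite inE => /andP [_ /Hdis].
by [].
Qed.


Lemma span_basic (K : closedFieldType) k (n : 'I_k -> nat) (hn : forall i, (0 < n i)%N)
  (U : {set 'I_k}) : in_span_of_points 1 (basic K (n:=n) U).
Proof.
exists (fun _ => 1), (fun _ i (u : 'I_(n i).+1) => ((u : nat) == (i \in U))%:R); split.
  move=> _ i; exists (inord (i \in U)); rewrite inordK ?eqxx ?oner_neq0 //.
  by case: (i \in U) => //; rewrite ltnS hn.
by move=> j; rewrite big_ord1 mul1r.
Qed.

Lemma span_list (K : closedFieldType) k (n : 'I_k -> nat) (hn : forall i, (0 < n i)%N)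
  (r : seq 'I_k) :
  in_span_of_points (size r) (fun j : midx n => \sum_(i <- r) basic K [set i] j).
Proof.
elim: r => [|a r IH] /=.
  by apply: span_ext (span0 K n) => j; rewrite big_nil.
have := span_add (span_basic K hn [set a]) IH.
by apply: span_ext => j; rewrite big_cons.
Qed.

Lemma upperG (K : closedFieldType) k (n : 'I_k -> nat) (hn : forall i, (0 < n i)%N)
  (S R : {set 'I_k}) : in_span_of_points #|S|.+1 (G (n:=n) S R (0 : K) 1).
Proof.
have := span_add (span_list K hn (enum S)) (span_basic K hn R).
rewrite addn1 -cardE; apply: span_ext => j.
by rewrite /G big_enum mul0r addr0 mul1r.
Qed.


Fixpoint pevalP (K : closedFieldType) (J : Type) (e : pexpr K J) (P : J -> {poly K}) : {poly K} :=
  match e with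
  | PVar j => P j
  | PConst c => c%:P
  | PAdd e1 e2 => pevalP e1 P + pevalP e2 P
  | PMul e1 e2 => pevalP e1 P * pevalP e2 P
  end.

Lemma pevalP_horner (K : closedFieldType) (J : Type) (e : pexpr K J) P t :
  (pevalP e P).[t] = peval e (fun j => (P j).[t]).
Proof.
elim: e => [j|c|e1 IH1 e2 IH2|e1 IH1 e2 IH2] /=.
- by [].
- by rewrite hornerC.
- by rewrite hornerD IH1 IH2.
- by rewrite hornerM IH1 IH2.
Qed.

Lemma peval_ext (K : closedFieldType) (J : Type) (e : pexpr K J) (T T' : J -> K) :
  (forall j, T j = T' j) -> peval e T = peval e T'.
Proof. move=> E; elim: e => //= [e1 -> e2 ->|e1 -> e2 ->] //. Qed.

Lemma closure_poly (K : closedFieldType) (J : Type) (S' : (J -> K) -> Prop)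
  (P : J -> {poly K}) (T : J -> K) :
  (forall j, T j = (P j).[0]) -> (forall t, t != 0 -> S' (fun j => (P j).[t])) ->
  zariski_closure S' T.
Proof.
move=> HT HS e He; rewrite (peval_ext e HT) -pevalP_horner.
set q := pevalP e P.
have Hq : forall t, t != 0 -> q.[t] = 0.
  by move=> t Ht; rewrite /q pevalP_horner; apply: He; apply: HS.
case: (eqVneq q 0) => [->|qn0]; first by rewrite horner0.
exfalso.
have : size ('X * q + 1) != 1%N.
  rewrite size_polyDl mulrC size_mulX //; last by rewrite size_poly1 ltnS size_poly_gt0.
  by rewrite eqSS -lt0n size_poly_gt0.
move/closed_rootP => [t /rootP].
rewrite hornerD hornerM hornerX hornerC.
case: (eqVneq t 0) => [->|tn0].
  by rewrite mul0r add0r => /eqP; rewrite oner_eq0.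
by rewrite Hq // mulr0 add0r => /eqP; rewrite oner_eq0.
Qed.

Lemma seq_expand (K : closedFieldType) (I : eqType) (x y : I -> K) (r : seq I) :
  uniq r -> exists q : {poly K},
  \prod_(i <- r) ((x i)%:P + 'X * (y i)%:P) =
  (\prod_(i <- r) x i)%:P +
     'X * ((\sum_(i <- r) y i * \prod_(i' <- rem i r) x i')%:P + 'X * q).
Proof.
elim: r => [|a r IH] /=.
  by move=> _; exists 0; rewrite !big_nil mulr0 addr0 mulr0 addr0.
move=> /andP [Har Hr]; have [q Hq] := IH Hr.
set D := \sum_(i <- r) y i * \prod_(i' <- rem i r) x i'.
have ED : \sum_(i <- a :: r) y i * \prod_(i' <- rem i (a :: r)) x i' =
          y a * \prod_(i <- r) x i + x a * D.
  rewrite big_cons /= eqxx; congr (_ + _).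
  rewrite /D mulr_sumr big_seq_cond [RHS]big_seq_cond; apply: eq_bigr => i /andP [Hi _].
  have -> : (a == i) = false by apply/negbTE; apply/eqP => E; move: Har; rewrite E Hi.
  by rewrite big_cons mulrCA.
exists ((x a)%:P * q + (y a)%:P * (D%:P + 'X * q)).
rewrite ED !big_cons Hq !polyCD !polyCM; ring.
Qed.

Definition xo (K : closedFieldType) m (u : 'I_m) : K := ((u : nat) == 0%N)%:R.
Definition yo (K : closedFieldType) k m (S : {set 'I_k}) (i : 'I_k) (u : 'I_m) : K :=
  (((u : nat) == 1%N) && (i \in S))%:R.

Definition Ap (K : closedFieldType) k (n : 'I_k -> nat) (S : {set 'I_k}) (j : midx n) : {poly K} :=
  \prod_i ((xo K (j i))%:P + 'X * (yo K S i (j i))%:P).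

Lemma Ap_expand (K : closedFieldType) k (n : 'I_k -> nat) (S : {set 'I_k}) (j : midx n) :
  exists q, Ap K S j = (basic K set0 j)%:P +
     'X * ((\sum_(i in S) basic K [set i] j)%:P + 'X * q).
Proof.
have [q Hq] := seq_expand (fun i => xo K (j i)) (fun i => yo K S i (j i)) (index_enum_uniq 'I_k).
exists q; rewrite /Ap Hq; congr (_%:P + 'X * (_%:P + _)).
  by apply: eq_bigr => i _; rewrite in_set0.
rewrite [RHS]big_mkcond /= big_seq [RHS]big_seq; apply: eq_bigr => i Hi.
rewrite /yo /basic (big_rem i Hi) /= !inE eqxx.
case: (i \in S); last by rewrite andbF mul0r.
rewrite andbT; congr (_ * _); rewrite big_seq [RHS]big_seq; apply: eq_bigr => i' Hi'.
have Hne : i' != i.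
  by move: Hi'; rewrite mem_rem_uniq ?index_enum_uniq // inE => /andP [].
by rewrite inE (negbTE Hne).
Qed.

Lemma secant3_G (K : closedFieldType) k (n : 'I_k -> nat) (hn : forall i, (0 < n i)%N)
  (S R : {set 'I_k}) : secant 3 (G (n:=n) S R (0 : K) 1).
Proof.
apply: (closure_poly (P := fun j => (Ap K S j - (basic K set0 j)%:P) %/ 'X + (basic K R j)%:P)).
  move=> j; have [q Hq] := Ap_expand K S j.
  rewrite Hq [X in X %/ _](_ : _ = 'X * ((\sum_(i in S) basic K [set i] j)%:P + 'X * q)); last by ring.
  rewrite mulKp ?polyX_eq0 //.
  by rewrite /G !hornerE.
move=> t Ht.
exists (fun a : 'I_3 => if (a : nat) == 0%N then t^-1 else if (a : nat) == 1%N then - t^-1 else 1).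
exists (fun (a : 'I_3) (i : 'I_k) (u : 'I_(n i).+1) =>
   if (a : nat) == 0%N then xo K u + t * yo K S i u
   else if (a : nat) == 1%N then xo K u else ((u : nat) == (i \in R))%:R).
split.
  move=> a i; case: ((a : nat) == 0%N).
    by exists ord0; rewrite /xo /yo /= mulr0 addr0 oner_neq0.
  case: ((a : nat) == 1%N); first by exists ord0; rewrite /xo oner_neq0.
  exists (inord (i \in R)); rewrite inordK ?eqxx ?oner_neq0 //.
  by case: (i \in R) => //; rewrite ltnS hn.
move=> j; have [q Hq] := Ap_expand K S j.
rewrite Hq [X in X %/ _](_ : _ = 'X * ((\sum_(i in S) basic K [set i] j)%:P + 'X * q)); last by ring.
rewrite mulKp ?polyX_eq0 //.
rewrite !big_ord_recl big_ord0 /=.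
have E1 : \prod_(i < k) (xo K (j i) + t * yo K S i (j i)) = (Ap K S j).[t].
  by rewrite /Ap horner_prod; apply: eq_bigr => i _; rewrite !hornerE.
have E2 : \prod_(i < k) xo K (j i) = basic K set0 j.
  by apply: eq_bigr => i _; rewrite in_set0.
rewrite E1 E2 Hq -/(basic K R j) !hornerE.
rewrite /=; field; exact: Ht.
Qed.


Definition Wm k (A Ua Ub : {set 'I_k}) : {set 'I_k} := (Ua :&: A) :|: (Ub :\: A).

Lemma prod_split (K : closedFieldType) k (n : 'I_k -> nat) (v : forall i, 'I_(n i).+1 -> K)
  (A Ua Ub : {set 'I_k}) :
  \prod_i v i (patidx n (Wm A Ua Ub) i) =
  (\prod_(i in A) v i (patidx n Ua i)) * (\prod_(i | i \notin A) v i (patidx n Ub i)).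
Proof.
rewrite (bigID (mem A)) /=; congr (_ * _); apply: eq_bigr => i Hi; rewrite !ffunE !inE.
  by rewrite Hi andbT /= orbF.
by rewrite (negbTE Hi) andbF /=.
Qed.

Definition pneg (K : closedFieldType) (J : Type) (e : pexpr K J) := PMul (PConst J (-1)) e.

Definition pdet3 (K : closedFieldType) (J : Type) (m11 m12 m13 m21 m22 m23 m31 m32 m33 : pexpr K J) :=
  PAdd (PAdd (PAdd (PMul m11 (PMul m22 m33)) (PMul m12 (PMul m23 m31)))
             (PAdd (PMul m13 (PMul m21 m32)) (pneg (PMul m13 (PMul m22 m31)))))
       (PAdd (pneg (PMul m11 (PMul m23 m32))) (pneg (PMul m12 (PMul m21 m33)))).

Definition detE (K : closedFieldType) k (n : 'I_k -> nat) (A Ua1 Ua2 Ua3 Ub1 Ub2 Ub3 : {set 'I_k}) :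
  pexpr K (midx n) :=
  let m a b := PVar K (patidx n (Wm A a b)) in
  pdet3 (m Ua1 Ub1) (m Ua1 Ub2) (m Ua1 Ub3) (m Ua2 Ub1) (m Ua2 Ub2) (m Ua2 Ub3)
        (m Ua3 Ub1) (m Ua3 Ub2) (m Ua3 Ub3).

Lemma detE_vanish (K : closedFieldType) k (n : 'I_k -> nat) (A Ua1 Ua2 Ua3 Ub1 Ub2 Ub3 : {set 'I_k})
  (U : tensor K n) : in_span_of_points 2 U ->
  peval (detE K n A Ua1 Ua2 Ua3 Ub1 Ub2 Ub3) U = 0.
Proof.
move=> [c [v [_ HU]]]; rewrite /= !HU !big_ord_recl !big_ord0 !prod_split /=.
ring.
Qed.



Lemma val_single (K : closedFieldType) k (n : 'I_k -> nat) (hn : forall i, (0 < n i)%N)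
  (S W : {set 'I_k}) i0 : i0 \in S -> W = [set i0] ->
  G (n:=n) S (~: S) (0 : K) 1 (patidx n W) = 1.
Proof.
move=> Hi0 ->; rewrite G_patidx // (big_setD1 i0 Hi0) /= eqxx big1; last first.
  move=> i' Hi'; rewrite (inj_eq set1_inj).
  by move: Hi'; rewrite !inE => /andP [/negbTE ->].
have -> : (~: S == [set i0]) = false.
  by apply/negbTE/eqP => E; move: (set11 i0); rewrite -E inE Hi0.
by rewrite mul0r !mulr0 !addr0.
Qed.

Lemma val_R (K : closedFieldType) k (n : 'I_k -> nat) (hn : forall i, (0 < n i)%N)
  (S W : {set 'I_k}) : W = ~: S ->
  G (n:=n) S (~: S) (0 : K) 1 (patidx n W) = 1.
Proof.
move=> ->; rewrite G_patidx // big1 ?eqxx ?mul0r ?mulr1 ?add0r //.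
move=> i Hi; have -> : ([set i] == ~: S) = false.
  by apply/negbTE/eqP => E; move: (set11 i); rewrite E inE Hi.
by [].
Qed.

Lemma val_zero (K : closedFieldType) k (n : 'I_k -> nat) (hn : forall i, (0 < n i)%N)
  (S W : {set 'I_k}) : (forall i, i \in S -> [set i] != W) -> ~: S != W ->
  G (n:=n) S (~: S) (0 : K) 1 (patidx n W) = 0.
Proof.
move=> H1 H2; rewrite G_patidx // big1 ?(negbTE H2) ?mul0r ?mulr0 ?add0r //.
by move=> i Hi; rewrite (negbTE (H1 i Hi)).
Qed.

Lemma ne1a k (S W : {set 'I_k}) z : z \in W -> z \notin S -> forall i, i \in S -> [set i] != W.
Proof. by move=> Hz HzS i Hi; apply/eqP => E; move: Hz; rewrite -E inE => /eqP Ez; move: HzS; rewrite Ez Hi. Qed.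

Lemma ne1b k (S W : {set 'I_k}) z1 z2 : z1 \in W -> z2 \in W -> z1 != z2 ->
  forall i, i \in S -> [set i] != W.
Proof.
move=> H1 H2 H12 i _; apply/eqP => E; move: H1 H2 H12; rewrite -E !inE => /eqP -> /eqP ->.
by rewrite eqxx.
Qed.

Lemma ne1c k (S W : {set 'I_k}) : (forall z, z \notin W) -> forall i, i \in S -> [set i] != W.
Proof. by move=> H i _; apply/eqP => E; move: (H i); rewrite -E set11. Qed.

Lemma neRd k (S W : {set 'I_k}) z : z \notin S -> z \notin W -> ~: S != W.
Proof. by move=> H1 H2; apply/eqP => E; move: H2; rewrite -E inE H1. Qed.

Lemma neRe k (S W : {set 'I_k}) z : z \in W -> z \in S -> ~: S != W.
Proof. by move=> H1 H2; apply/eqP => E; move: H1; rewrite -E inE H2. Qed.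

Lemma not_sec2 (K : closedFieldType) k (n : 'I_k -> nat) (hn : forall i, (0 < n i)%N)
  (S : {set 'I_k}) i1 i2 r1 r2 :
  i1 \in S -> i2 \in S -> r1 \notin S -> r2 \notin S -> i1 != i2 -> r1 != r2 ->
  ~ secant 2 (G (n:=n) S (~: S) (0 : K) 1).
Proof.
move=> hi1 hi2 hr1 hr2 d12 dr12 Hsec.
have hr1' : (r1 \in S) = false by apply/negbTE.
have hr2' : (r2 \in S) = false by apply/negbTE.
have n_ir : forall i r, i \in S -> r \notin S -> (i == r) = false /\ (r == i) = false.
  move=> i r Hi Hr; split; apply/negbTE/eqP => E.
    by move: Hi; rewrite E (negbTE Hr).
  by move: Hr; rewrite E Hi.
have [e1 e1'] := n_ir _ _ hi1 hr1; have [e2 e2'] := n_ir _ _ hi1 hr2.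
have [e3 e3'] := n_ir _ _ hi2 hr1; have [e4 e4'] := n_ir _ _ hi2 hr2.
have e5 : (i1 == i2) = false by apply/negbTE.
have e5' : (i2 == i1) = false by rewrite eq_sym.
have e6 : (r1 == r2) = false by apply/negbTE.
have e6' : (r2 == r1) = false by rewrite eq_sym.
set A := [set i1; r1].
have := Hsec (detE K n A [set r1] [set i1] set0 (~: S) set0 [set i2])
   (fun U HU => @detE_vanish K k n A [set r1] [set i1] set0 (~: S) set0 [set i2] U HU).
rewrite /=.
have v11 : G (n:=n) S (~: S) (0 : K) 1 (patidx n (Wm A [set r1] (~: S))) = 1.
  apply: val_R => //; apply/setP => z; rewrite /Wm /A !inE.
  case: (eqVneq z r1) => [->|/negbTE n1]; first by rewrite ?eqxx ?e1 ?e1' ?e2 ?e2' ?e3 ?e3' ?e4 ?e4' ?e5 ?e5' ?e6 ?e6' ?hi1 ?hi2 ?hr1' ?hr2' /= ?orbT ?orbF ?andbT ?andbF ?hr1.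
  case: (eqVneq z i1) => [->|/negbTE n2]; first by rewrite ?eqxx ?e1 ?e1' ?e2 ?e2' ?e3 ?e3' ?e4 ?e4' ?e5 ?e5' ?e6 ?e6' ?hi1 ?hi2 ?hr1' ?hr2' /= ?orbT ?orbF ?andbT ?andbF.
  by rewrite ?n1 ?n2 ?eqxx ?e1 ?e1' ?e2 ?e2' ?e3 ?e3' ?e4 ?e4' ?e5 ?e5' ?e6 ?e6' ?hi1 ?hi2 ?hr1' ?hr2' /= ?orbT ?orbF ?andbT ?andbF.
have v12 : G (n:=n) S (~: S) (0 : K) 1 (patidx n (Wm A [set r1] set0)) = 0.
  apply: val_zero => //.
    by apply: (ne1a (z := r1)) => //; rewrite /Wm /A !inE ?eqxx ?e1 ?e1' ?e2 ?e2' ?e3 ?e3' ?e4 ?e4' ?e5 ?e5' ?e6 ?e6' ?hi1 ?hi2 ?hr1' ?hr2' /= ?orbT ?orbF ?andbT ?andbF.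
  by apply: (neRd (z := r2)) => //; rewrite /Wm /A !inE ?eqxx ?e1 ?e1' ?e2 ?e2' ?e3 ?e3' ?e4 ?e4' ?e5 ?e5' ?e6 ?e6' ?hi1 ?hi2 ?hr1' ?hr2' /= ?orbT ?orbF ?andbT ?andbF.
have v13 : G (n:=n) S (~: S) (0 : K) 1 (patidx n (Wm A [set r1] [set i2])) = 0.
  apply: val_zero => //.
    by apply: (ne1a (z := r1)) => //; rewrite /Wm /A !inE ?eqxx ?e1 ?e1' ?e2 ?e2' ?e3 ?e3' ?e4 ?e4' ?e5 ?e5' ?e6 ?e6' ?hi1 ?hi2 ?hr1' ?hr2' /= ?orbT ?orbF ?andbT ?andbF.
  by apply: (neRe (z := i2)) => //; rewrite /Wm /A !inE ?eqxx ?e1 ?e1' ?e2 ?e2' ?e3 ?e3' ?e4 ?e4' ?e5 ?e5' ?e6 ?e6' ?hi1 ?hi2 ?hr1' ?hr2' /= ?orbT ?orbF ?andbT ?andbF.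
have v21 : G (n:=n) S (~: S) (0 : K) 1 (patidx n (Wm A [set i1] (~: S))) = 0.
  apply: val_zero => //.
    by apply: (ne1a (z := r2)) => //; rewrite /Wm /A !inE ?eqxx ?e1 ?e1' ?e2 ?e2' ?e3 ?e3' ?e4 ?e4' ?e5 ?e5' ?e6 ?e6' ?hi1 ?hi2 ?hr1' ?hr2' /= ?orbT ?orbF ?andbT ?andbF.
  by apply: (neRe (z := i1)) => //; rewrite /Wm /A !inE ?eqxx ?e1 ?e1' ?e2 ?e2' ?e3 ?e3' ?e4 ?e4' ?e5 ?e5' ?e6 ?e6' ?hi1 ?hi2 ?hr1' ?hr2' /= ?orbT ?orbF ?andbT ?andbF.
have v22 : G (n:=n) S (~: S) (0 : K) 1 (patidx n (Wm A [set i1] set0)) = 1.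
  apply: (@val_single K k n hn S _ i1 hi1); apply/setP => z; rewrite /Wm /A !inE.
  case: (eqVneq z i1) => [->|/negbTE n1]; first by rewrite ?eqxx ?e1 ?e1' ?e2 ?e2' ?e3 ?e3' ?e4 ?e4' ?e5 ?e5' ?e6 ?e6' ?hi1 ?hi2 ?hr1' ?hr2' /= ?orbT ?orbF ?andbT ?andbF.
  by rewrite ?n1 ?eqxx ?e1 ?e1' ?e2 ?e2' ?e3 ?e3' ?e4 ?e4' ?e5 ?e5' ?e6 ?e6' ?hi1 ?hi2 ?hr1' ?hr2' /= ?orbT ?orbF ?andbT ?andbF.
have v23 : G (n:=n) S (~: S) (0 : K) 1 (patidx n (Wm A [set i1] [set i2])) = 0.
  apply: val_zero => //.
    by apply: (ne1b (z1 := i1) (z2 := i2)) => //; rewrite /Wm /A !inE ?eqxx ?e1 ?e1' ?e2 ?e2' ?e3 ?e3' ?e4 ?e4' ?e5 ?e5' ?e6 ?e6' ?hi1 ?hi2 ?hr1' ?hr2' /= ?orbT ?orbF ?andbT ?andbF.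
  by apply: (neRe (z := i1)) => //; rewrite /Wm /A !inE ?eqxx ?e1 ?e1' ?e2 ?e2' ?e3 ?e3' ?e4 ?e4' ?e5 ?e5' ?e6 ?e6' ?hi1 ?hi2 ?hr1' ?hr2' /= ?orbT ?orbF ?andbT ?andbF.
have v31 : G (n:=n) S (~: S) (0 : K) 1 (patidx n (Wm A set0 (~: S))) = 0.
  apply: val_zero => //.
    by apply: (ne1a (z := r2)) => //; rewrite /Wm /A !inE ?eqxx ?e1 ?e1' ?e2 ?e2' ?e3 ?e3' ?e4 ?e4' ?e5 ?e5' ?e6 ?e6' ?hi1 ?hi2 ?hr1' ?hr2' /= ?orbT ?orbF ?andbT ?andbF.
  by apply: (neRd (z := r1)) => //; rewrite /Wm /A !inE ?eqxx ?e1 ?e1' ?e2 ?e2' ?e3 ?e3' ?e4 ?e4' ?e5 ?e5' ?e6 ?e6' ?hi1 ?hi2 ?hr1' ?hr2' /= ?orbT ?orbF ?andbT ?andbF.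
have v32 : G (n:=n) S (~: S) (0 : K) 1 (patidx n (Wm A set0 set0)) = 0.
  apply: val_zero => //.
    by apply: ne1c => z; rewrite /Wm /A !inE ?eqxx ?e1 ?e1' ?e2 ?e2' ?e3 ?e3' ?e4 ?e4' ?e5 ?e5' ?e6 ?e6' ?hi1 ?hi2 ?hr1' ?hr2' /= ?orbT ?orbF ?andbT ?andbF.
  by apply: (neRd (z := r1)) => //; rewrite /Wm /A !inE ?eqxx ?e1 ?e1' ?e2 ?e2' ?e3 ?e3' ?e4 ?e4' ?e5 ?e5' ?e6 ?e6' ?hi1 ?hi2 ?hr1' ?hr2' /= ?orbT ?orbF ?andbT ?andbF.
have v33 : G (n:=n) S (~: S) (0 : K) 1 (patidx n (Wm A set0 [set i2])) = 1.
  apply: (@val_single K k n hn S _ i2 hi2); apply/setP => z; rewrite /Wm /A !inE.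
  case: (eqVneq z i2) => [->|/negbTE n1]; first by rewrite ?eqxx ?e1 ?e1' ?e2 ?e2' ?e3 ?e3' ?e4 ?e4' ?e5 ?e5' ?e6 ?e6' ?hi1 ?hi2 ?hr1' ?hr2' /= ?orbT ?orbF ?andbT ?andbF.
  case: (eqVneq z i1) => [->|/negbTE n2]; first by rewrite ?eqxx ?e1 ?e1' ?e2 ?e2' ?e3 ?e3' ?e4 ?e4' ?e5 ?e5' ?e6 ?e6' ?hi1 ?hi2 ?hr1' ?hr2' /= ?orbT ?orbF ?andbT ?andbF.
  by rewrite ?n1 ?n2 ?n3 ?eqxx ?e1 ?e1' ?e2 ?e2' ?e3 ?e3' ?e4 ?e4' ?e5 ?e5' ?e6 ?e6' ?hi1 ?hi2 ?hr1' ?hr2' /= ?orbT ?orbF ?andbT ?andbF.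
rewrite v11 v12 v13 v21 v22 v23 v31 v32 v33.
move/eqP; rewrite /=.
have -> : (1 * (1 * 1) + 0 * (0 * 0) + (0 * (0 * 0) + -1 * (0 * (1 * 0))) +
  (-1 * (1 * (0 * 0)) + -1 * (0 * (0 * 1))) : K) = 1 by ring.
by rewrite oner_eq0.
Qed.


Theorem theorem2 (K : closedFieldType) (k : nat) (n : 'I_k -> nat)
    (hk : (3 <= k)%N) (hn : forall i, (0 < n i)%N) (x : nat)
    (hx : (3 <= x <= k.-1)%N) :
  exists T : tensor K n,
    (exists j, T j != 0) /\ secant 3 T /\ ~ secant 2 T /\ X_rank T x.
Proof.
move: hx => /andP [hx3 hxk].
set m := x.-1.
have Ex : x = m.+1 by rewrite /m; lia.
have Hmk : (m <= k)%N by rewrite /m; lia.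
set S := [set widen_ord Hmk i | i : 'I_m].
have memS : forall z : 'I_k, (z \in S) = (z < m)%N.
  move=> z; apply/imsetP/idP => [[w _ ->] /= | Hz]; first exact: ltn_ord.
  by exists (Ordinal Hz) => //; apply: val_inj.
have cardS : #|S| = m.
  rewrite card_imset ?card_ord // => a b /(congr1 val) /= H; exact: val_inj.
have k0 : (0 < k)%N by lia.
have k1 : (1 < k)%N by lia.
have k2 : (k.-1 < k)%N by lia.
have k3 : (k.-2 < k)%N by lia.
set i1 := Ordinal k0; set i2 := Ordinal k1; set r1 := Ordinal k2; set r2 := Ordinal k3.
have hi1 : i1 \in S by rewrite memS /=; lia.
have hi2 : i2 \in S by rewrite memS /=; lia.
have hr1 : r1 \notin S by rewrite memS /=; apply/negP; lia.
have hr2 : r2 \notin S by rewrite memS /=; apply/negP; lia.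
have d12 : i1 != i2 by rewrite -val_eqE.
have dr12 : r1 != r2 by rewrite -val_eqE /=; apply/eqP; lia.
exists (G (n:=n) S (~: S) (0 : K) 1).
split; first by exists (patidx n (~: S)); rewrite val_R // oner_neq0.
split; first exact: secant3_G.
split; first exact: (not_sec2 hn hi1 hi2 hr1 hr2 d12 dr12).
split.
  by rewrite Ex -cardS; apply: upperG.
move=> s Hs; rewrite Ex.
have hr1R : r1 \in ~: S by rewrite inE.
apply: (lowerG hn hr1R (oner_neq0 K) cardS _ Hs).
by move=> i Hi; rewrite inE Hi.
Qed.
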